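(* Let $w,z,f,D,r$ and $S_a$ be as in the context, and let $d\sigma_0$ be the area element of $S_a$ induced by the Euclidean metric. Then there is a constant $C$ independent of $a\ge1$ such that $$\int_{S_a}\frac{f a}{D r^4}\,d\sigma_0\le \frac{C}{a}\qquad\text{and}\qquad \int_{S_a}\frac{f^2a^2w}{D^3r^5}\,d\sigma_0\le\frac{C}{a},$$ where $f=f(a)$ and $w=w(t)$ at the point of parameter $t$.
   Context: Let $l>0$ and $w,z:[0,l]\to\mathbb{R}$ be smooth with the surface of revolution $(w\cos\theta,w\sin\theta,z)$ a smooth closed convex surface diffeomorphic to $\mathbb{S}^2$ with positive Gaussian curvature, $C_1^2\le w^2+z^2\le C_2^2$ ($C_1,C_2>0$), $w'^2+z'^2=1$, $w>0$ on $(0,l)$, $w(0)=w(l)=0$, $z'(0)=z'(l)=0$ ($w$ odd and $z$ even across the endpoints), $z(0)>z(l)$. Let $f(a)\ge1$ for $a\ge1$, $h=f(a)z$, $D=\sqrt{w'^2+f^2z'^2}$, $S_a$ the surface $(aw(t)\cos\theta, aw(t)\sin\theta, ah(t))$, and $r=a\sqrt{w^2+h^2}$ the Euclidean distance to the origin on $S_a$. Note $d\sigma_0=a^2Dw\,dt\,d\theta$. *)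

(* Defs.v *)
From Stdlib Require Import Reals.
Open Scope R_scope.

Definition smooth (g : R -> R) : Prop :=
  exists d : nat -> R -> R,
    d O = g /\ forall (n : nat) (x : R), derivable_pt_lim (d n) x (d (S n) x).

Definition Rint (F : R -> R) (a b I : R) : Prop :=
  exists pr : Riemann_integrable F a b, RiemannInt pr = I.

(* Integral over S_a of g(t,theta) against the area element
   d sigma_0 = a^2 D(t) w(t) dt dtheta, (t,theta) in [0,l] x [0,2 pi],
   as an iterated Riemann integral. *)
Definition surf_integral_Sa (l a : R) (w D : R -> R) (g : R -> R -> R) (I : R)
  : Prop :=
  exists inner : R -> R,
    (forall th, 0 <= th <= 2 * PI ->
       Rint (fun t => g t th * (a ^ 2 * D t * w t)) 0 l (inner th)) /\
    Rint inner 0 (2 * PI) I.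

(* Gaussian curvature of the surface of revolution (w cos th, w sin th, z)
   at parameter t, given first (w1,z1) and second (w2,z2) derivatives. *)
Definition gauss_curv_rev (w w1 w2 z1 z2 : R -> R) (t : R) : R :=
  z1 t * (w1 t * z2 t - w2 t * z1 t) / (w t * (w1 t ^ 2 + z1 t ^ 2) ^ 2).

(* Main.v *)
Require Import Defs.
From Stdlib Require Import Reals Lra Psatz FunctionalExtensionality.
From Coquelicot Require Import Coquelicot.
Open Scope R_scope.

Lemma cp_mult f g x : continuity_pt f x -> continuity_pt g x -> continuity_pt (fun t => f t * g t) x.
Proof. intros; apply (continuity_pt_mult f g x); auto. Qed.
Lemma cp_plus f g x : continuity_pt f x -> continuity_pt g x -> continuity_pt (fun t => f t + g t) x.
Proof. intros; apply (continuity_pt_plus f g x); auto. Qed.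
Lemma cp_minus f g x : continuity_pt f x -> continuity_pt g x -> continuity_pt (fun t => f t - g t) x.
Proof. intros; apply (continuity_pt_minus f g x); auto. Qed.
Lemma cp_opp f x : continuity_pt f x -> continuity_pt (fun t => - f t) x.
Proof. intros; apply (continuity_pt_opp f x); auto. Qed.
Lemma cp_inv f x : continuity_pt f x -> f x <> 0 -> continuity_pt (fun t => / f t) x.
Proof. intros; apply (continuity_pt_inv f x); auto. Qed.
Lemma cp_div f g x : continuity_pt f x -> continuity_pt g x -> g x <> 0 -> continuity_pt (fun t => f t / g t) x.
Proof. intros; apply (continuity_pt_div f g x); auto. Qed.
Lemma cp_const (c x : R) : continuity_pt (fun _ => c) x.
Proof. apply continuity_pt_const; intros u v; auto. Qed.
Lemma cp_id x : continuity_pt (fun t => t) x.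
Proof. apply derivable_continuous_pt; apply derivable_pt_id. Qed.
Lemma cp_pow f n x : continuity_pt f x -> continuity_pt (fun t => f t ^ n) x.
Proof. intros H. apply (continuity_pt_comp f (fun y => y ^ n) x H).
  apply derivable_continuous_pt. exists (INR n * f x ^ Init.Nat.pred n). apply derivable_pt_lim_pow. Qed.
Lemma cp_sqrt f x : continuity_pt f x -> 0 <= f x -> continuity_pt (fun t => sqrt (f t)) x.
Proof. intros H H0. apply (continuity_pt_comp f sqrt x H). apply continuity_pt_sqrt; auto. Qed.
Lemma cp_abs f x : continuity_pt f x -> continuity_pt (fun t => Rabs (f t)) x.
Proof. intros H. apply (continuity_pt_comp f Rabs x H). apply Rcontinuity_abs. Qed.

Ltac cpt := repeat first [ apply cp_div | apply cp_mult | apply cp_plus | apply cp_minus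
   | apply cp_opp | apply cp_inv | apply cp_pow | apply cp_sqrt | apply cp_abs | apply cp_const | apply cp_id ].

Lemma to_cont f x : continuity_pt f x -> continuous f x.
Proof. intros H; apply continuity_pt_filterlim; auto. Qed.

Lemma surf_bound (l a : R) (w D : R -> R) (g : R -> R -> R) (G H dH : R -> R) (B : R) :
  0 < l ->
  (forall t th, g t th * (a ^ 2 * D t * w t) = G t) ->
  (forall t, 0 <= t <= l -> continuity_pt G t) ->
  (forall t, 0 <= t <= l -> derivable_pt_lim H t (dH t)) ->
  (forall t, 0 <= t <= l -> continuity_pt dH t) ->
  (forall t, 0 < t < l -> G t <= dH t) ->
  H l - H 0 <= B ->
  exists I, (exists inner : R -> R,
    (forall th, 0 <= th <= 2 * PI ->
       exists pr : Riemann_integrable (fun t => g t th * (a ^ 2 * D t * w t)) 0 l,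
          RiemannInt pr = inner th) /\
    exists pr : Riemann_integrable inner 0 (2 * PI), RiemannInt pr = I) /\ I <= 2 * PI * B.
Proof.
  intros Hl Hg HG HH HdH Hle HB.
  assert (Rm : Rmin 0 l = 0) by (apply Rmin_left; lra).
  assert (RM : Rmax 0 l = l) by (apply Rmax_right; lra).
  assert (exG : ex_RInt G 0 l).
  { apply (@ex_RInt_continuous R_CompleteNormedModule); rewrite Rm, RM; intros; apply to_cont; auto. }
  assert (exdH : ex_RInt dH 0 l).
  { apply (@ex_RInt_continuous R_CompleteNormedModule); rewrite Rm, RM; intros; apply to_cont; auto. }
  set (J := RInt G 0 l).
  exists (2 * PI * J). split.
  - exists (fun _ => J). split.
    + intros th _.
      assert (E : (fun t => g t th * (a ^ 2 * D t * w t)) = G)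
        by (apply functional_extensionality; auto).
      rewrite E. exists (ex_RInt_Reals_0 _ _ _ exG). rewrite <- RInt_Reals. reflexivity.
    + exists (ex_RInt_Reals_0 _ _ _ (ex_RInt_const 0 (2*PI) J)).
      rewrite <- RInt_Reals. rewrite RInt_const. unfold scal; simpl; unfold mult; simpl. ring.
  - assert (Hint : RInt dH 0 l = H l - H 0).
    { apply is_RInt_unique. apply (@is_RInt_derive R_CompleteNormedModule H dH); rewrite Rm, RM; intros x Hx.
      - apply is_derive_Reals; auto.
      - apply to_cont; auto. }
    assert (J <= RInt dH 0 l).
    { apply RInt_le; auto; lra. }
    pose proof PI_RGT_0. apply Rmult_le_compat_l; lra.
Qed.

Lemma div_le a b c : 0 < b -> a <= c * b -> a / b <= c.
Proof. intros Hb H. unfold Rdiv. apply Rmult_le_reg_r with b; auto.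
  rewrite Rmult_assoc, Rinv_l by lra. lra. Qed.

Lemma alg1 (C1 C2 c F W Z Z1 : R) :
 0<C1 -> 0<C2 -> 0<c -> 1<=F -> 0<=W -> W^2 <= C2^2 -> C1^2 <= W^2+Z^2 -> Z1 <= 0 ->
 (Rabs Z < C1/2 -> Z1 <= -c) ->
 F*W/(W^2+(F*Z)^2)^2 <= C2/((Rmin (3/4*C1^2) 1)^2*c) * (-(F*Z1*/(1+(F*Z)^2))) + C2/(C1/2)^4.
Proof.
  intros HC1 HC2 Hc HF HW HW2 HWZ HZ1 Hcz.
  assert (HWC : W <= C2) by nra.
  set (X := 1 + (F*Z)^2). set (q := W^2 + (F*Z)^2). set (m := Rmin (3/4*C1^2) 1).
  assert (HX : 1 <= X) by (unfold X; nra).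
  assert (Hm1 : m <= 3/4*C1^2) by apply Rmin_l.
  assert (Hm2 : m <= 1) by apply Rmin_r.
  assert (Hm0 : 0 < m) by (unfold m; apply Rmin_glb_lt; nra).
  assert (HF2 : Z^2 <= (F*Z)^2) by (rewrite Rpow_mult_distr; assert (1 <= F^2) by nra; assert (0 <= Z^2) by nra; nra).
  assert (Hq : C1^2 <= q) by (unfold q; nra).
  assert (Hq0 : 0 < q) by nra.
  assert (HM1 : 0 <= C2/(C1/2)^4) by (apply Rlt_le, Rdiv_lt_0_compat; [lra| apply pow_lt; lra]).
  assert (HT : 0 <= -(F*Z1*/X)).
  { assert (0 < /X) by (apply Rinv_0_lt_compat; lra). assert (F*Z1 <= 0) by nra. nra. }
  assert (HK : 0 < C2/(m^2*c)) by (apply Rdiv_lt_0_compat; [lra| apply Rmult_lt_0_compat; [apply pow_lt|]; lra]).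
  destruct (Rlt_or_le (Rabs Z) (C1/2)) as [Hs|Hb].
  - assert (HZ1c := Hcz Hs).
    assert (HZ2 : Z^2 <= C1^2/4).
    { rewrite <- (pow2_abs Z). pose proof (Rabs_pos Z). nra. }
    assert (HqX : m * X <= q) by (unfold q, X; nra).
    assert (Hmain : F*W/q^2 <= C2/(m^2*c) * (-(F*Z1*/X))).
    { apply div_le; [nra|].
      assert (Hm2p : 0 < m^2) by nra.
      set (P := C2*F/(m^2*X)).
      assert (HP : 0 < P) by (unfold P; apply Rdiv_lt_0_compat; nra).
      assert (E : C2/(m^2*c) * (-(F*Z1*/X)) = P * (-Z1/c)) by (unfold P; field; repeat split; nra).
      rewrite E.
      assert (Hz : 1 <= -Z1/c).
      { apply Rmult_le_reg_r with c; auto. unfold Rdiv; rewrite Rmult_assoc, Rinv_l; lra. }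
      assert (H1 : (m*X)^2 <= q^2) by (apply pow_incr; nra).
      assert (EP : P * (m*X)^2 = C2*F*X) by (unfold P; field; nra).
      assert (P*q^2 <= P*(-Z1/c)*q^2) by (assert (0 <= P*q^2) by (assert (0 <= q^2) by nra; nra); nra).
      assert (P*(m*X)^2 <= P*q^2) by nra.
      assert (F*W <= C2*F) by nra. assert (C2*F <= C2*F*X) by (assert (0 <= C2*F) by nra; nra). lra. }
    lra.
  - assert (HZ2 : C1^2/4 <= Z^2).
    { rewrite <- (pow2_abs Z). assert ((C1/2)*(C1/2) <= Rabs Z * Rabs Z) by (apply Rmult_le_compat; lra). nra. }
    clear Hcz.
    assert (HqF : F^2 * (C1/2)^2 <= q) by (unfold q; nra).
    assert (Hmain : F*W/q^2 <= C2/(C1/2)^4).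
    { apply div_le; [nra|].
      assert (H1 : (F^2*(C1/2)^2)^2 <= q^2) by (apply pow_incr; split; [nra|auto]).
      replace (C2/(C1/2)^4 * q^2) with (C2 * (q^2 / (C1/2)^4)) by (field; lra).
      assert (H4 : F^4 <= q^2/(C1/2)^4).
      { apply Rmult_le_reg_r with ((C1/2)^4). apply pow_lt; lra.
        unfold Rdiv. rewrite Rmult_assoc, Rinv_l, Rmult_1_r. nra. apply pow_nonzero; lra. }
      assert (F <= F^4) by (replace (F^4) with (F*F^3) by ring; assert (1 <= F^3) by (apply pow_R1_Rle; lra); nra).
      assert (F*W <= C2*F) by nra. assert (C2*F <= C2*F^4) by nra. assert (C2*F^4 <= C2*(q^2/(C1/2)^4)) by nra. lra. }
    assert (0 <= C2/(m^2*c) * (-(F*Z1*/X))) by nra.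
    lra.
Qed.
Lemma le_div x y z : 0 < y -> x * y <= z -> x <= z / y.
Proof. intros Hy H. apply Rmult_le_reg_r with y; auto. unfold Rdiv; rewrite Rmult_assoc, Rinv_l by lra; lra. Qed.

Lemma alg2 (C1 c F W Z W1 Z1 : R) : 0<C1 -> 0<c -> 1<=F -> 0<=W -> C1^2 <= W^2+Z^2 -> W1^2+Z1^2 = 1 ->
  (Rabs Z < C1/2 -> Z1 <= -c) ->
  F^2*W^2/((W1^2+F^2*Z1^2) * sqrt(W^2+(F*Z)^2)^5) <= 1/(C1/2)^3 + 1/(c^2*C1^3).
Proof.
  intros HC1 Hc HF HW HWZ HU Hcz.
  set (q := W^2+(F*Z)^2). set (D2 := W1^2+F^2*Z1^2).
  assert (HF2 : Z^2 <= (F*Z)^2) by (rewrite Rpow_mult_distr; assert (1 <= F^2) by nra; assert (0 <= Z^2) by nra; nra).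
  assert (Hq : C1^2 <= q) by (unfold q; nra).
  assert (Hq0 : 0 <= q) by nra.
  set (s := sqrt q).
  assert (Hs2 : s^2 = q) by (unfold s; apply pow2_sqrt; auto).
  assert (Hs0 : 0 <= s) by (unfold s; apply sqrt_pos).
  assert (HsC : C1 <= s) by nra.
  assert (HD : 1 <= D2) by (unfold D2; assert (Z1^2 <= F^2*Z1^2) by (assert (1 <= F^2) by nra; assert (0 <= Z1^2) by nra; nra); nra).
  assert (HWs : W^2 <= s^2) by (rewrite Hs2; unfold q; nra).
  assert (Hs3 : C1^3 <= s^3) by (apply pow_incr; lra).
  assert (Hs5 : 0 < s^5) by (apply pow_lt; lra).
  assert (B1p : 0 < 1/(C1/2)^3) by (apply Rdiv_lt_0_compat; [lra|apply pow_lt; lra]).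
  assert (B2p : 0 < 1/(c^2*C1^3)) by (apply Rdiv_lt_0_compat; [lra|apply Rmult_lt_0_compat; apply pow_lt; lra]).
  assert (HD5 : 0 < D2 * s^5) by nra.
  apply div_le; auto.
  destruct (Rlt_or_le (Rabs Z) (C1/2)) as [Hs|Hb].
  - assert (HZ1 := Hcz Hs).
    assert (HD2 : F^2*c^2 <= D2) by (unfold D2; assert (c^2 <= Z1^2) by nra; assert (0 <= F^2) by nra; nra).
    assert (F^2*W^2 <= 1/(c^2*C1^3) * (D2 * s^5)).
    { replace (1/(c^2*C1^3) * (D2 * s^5)) with ((D2*s^5)/(c^2*C1^3)) by (field; split; lra).
      apply le_div. apply Rmult_lt_0_compat; apply pow_lt; lra.
      assert (E : s^5 = s^2*s^3) by ring.
      assert (H1 : F^2*W^2*c^2 <= D2*s^2) by (assert (0 <= F^2*c^2) by nra; assert (0<=W^2) by nra; nra).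
      assert (H2 : F^2*W^2*c^2*C1^3 <= D2*s^2*C1^3) by (apply Rmult_le_compat_r; [apply pow_le; lra| auto]).
      assert (H3 : D2*s^2*C1^3 <= D2*s^2*s^3) by (apply Rmult_le_compat_l; [nra|auto]).
      rewrite E. lra. }
    nra.
  - assert (HZ2 : C1^2/4 <= Z^2).
    { rewrite <- (pow2_abs Z). assert ((C1/2)*(C1/2) <= Rabs Z * Rabs Z) by (apply Rmult_le_compat; lra). nra. }
    assert (HsF : F*(C1/2) <= s).
    { apply Rsqr_incr_0_var. unfold Rsqr. replace (s*s) with (s^2) by ring. rewrite Hs2. unfold q.
      rewrite Rpow_mult_distr. assert (0 <= W^2) by nra. assert (0 <= F^2) by nra. nra. auto. }
    assert (HF3 : F^2*(C1/2)^3 <= s^3).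
    { assert (F^2 <= F^3) by (replace (F^3) with (F*F^2) by ring; nra).
      assert ((F*(C1/2))^3 <= s^3) by (apply pow_incr; split; [nra|auto]).
      rewrite Rpow_mult_distr in *. assert (0 < (C1/2)^3) by (apply pow_lt; lra). nra. }
    assert (F^2*W^2 <= 1/(C1/2)^3 * (D2 * s^5)).
    { replace (1/(C1/2)^3 * (D2 * s^5)) with ((D2*s^5)/(C1/2)^3) by (field; lra).
      apply le_div. apply pow_lt; lra.
      assert (E : s^5 = s^2*s^3) by ring.
      assert (H1 : F^2*W^2*(C1/2)^3 <= s^2*(F^2*(C1/2)^3)) by (assert (0 <= F^2*(C1/2)^3) by (assert (0 < (C1/2)^3) by (apply pow_lt; lra); nra); nra).
      assert (H2 : s^2*(F^2*(C1/2)^3) <= s^2*s^3) by (apply Rmult_le_compat_l; [nra|auto]).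
      assert (H3 : s^2*s^3 <= D2*(s^2*s^3)) by (assert (0 <= s^2*s^3) by nra; nra).
      rewrite E. lra. }
    nra.
Qed.

Lemma dl_eq f x l1 l2 : derivable_pt_lim f x l1 -> l1 = l2 -> derivable_pt_lim f x l2.
Proof. intros H E; subst; auto. Qed.
Lemma dl_plus f g x lf lg : derivable_pt_lim f x lf -> derivable_pt_lim g x lg ->
  derivable_pt_lim (fun t => f t + g t) x (lf + lg).
Proof. intros; apply (derivable_pt_lim_plus f g x); auto. Qed.
Lemma dl_mult f g x lf lg : derivable_pt_lim f x lf -> derivable_pt_lim g x lg ->
  derivable_pt_lim (fun t => f t * g t) x (lf * g x + f x * lg).
Proof. intros; apply (derivable_pt_lim_mult f g x); auto. Qed.
Lemma dl_const (c x : R) : derivable_pt_lim (fun _ => c) x 0.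
Proof. apply derivable_pt_lim_const. Qed.
Lemma dl_id x : derivable_pt_lim (fun t => t) x 1.
Proof. apply derivable_pt_lim_id. Qed.
Lemma dl_opp f x l : derivable_pt_lim f x l -> derivable_pt_lim (fun t => - f t) x (- l).
Proof. intros; apply (derivable_pt_lim_opp f x); auto. Qed.
Lemma dl_atan f x l : derivable_pt_lim f x l -> derivable_pt_lim (fun t => atan (f t)) x (/ (1 + f x ^ 2) * l).
Proof. intros H. apply (derivable_pt_lim_comp f atan x l _ H). apply derivable_pt_lim_atan. Qed.

Lemma eq1 a F D W q : 0 < a -> 0 < D -> 0 < q ->
  F * a / (D * (a * sqrt q) ^ 4) * (a ^ 2 * D * W) = / a * (F * W / q ^ 2).
Proof. intros Ha HD Hq.
  replace ((a * sqrt q) ^ 4) with (a^4 * (sqrt q ^ 2) ^ 2) by ring.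
  rewrite pow2_sqrt by lra. field. lra. Qed.

Lemma eq2 a F D W q : 0 < a -> 0 < D -> 0 < q ->
  F ^ 2 * a ^ 2 * W / (D ^ 3 * (a * sqrt q) ^ 5) * (a ^ 2 * D * W)
  = / a * (F ^ 2 * W ^ 2 / (D ^ 2 * sqrt q ^ 5)).
Proof. intros Ha HD Hq. assert (0 < sqrt q) by (apply sqrt_lt_R0; auto).
  field. repeat split; lra. Qed.
Theorem mainTheorem7
  (l C1 C2 : R) (w w1 w2 z z1 z2 : R -> R) (f : R -> R)
  (* smoothness of the (odd/even extended) profile, with its derivatives *)
  (Hws : smooth w) (Hzs : smooth z)
  (Hw1 : forall t, derivable_pt_lim w t (w1 t))
  (Hw2 : forall t, derivable_pt_lim w1 t (w2 t))
  (Hz1 : forall t, derivable_pt_lim z t (z1 t))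
  (Hz2 : forall t, derivable_pt_lim z1 t (z2 t))
  (* w odd and z even across the endpoints 0 and l *)
  (Hwodd0 : forall t, w (- t) = - w t) (Hzeven0 : forall t, z (- t) = z t)
  (Hwoddl : forall t, w (l + t) = - w (l - t))
  (Hzevenl : forall t, z (l + t) = z (l - t))
  (Hl : 0 < l) (HC1 : 0 < C1) (HC2 : 0 < C2)
  (Hbnd : forall t, 0 <= t <= l ->
     C1 ^ 2 <= w t ^ 2 + z t ^ 2 <= C2 ^ 2)
  (Hunit : forall t, 0 <= t <= l -> w1 t ^ 2 + z1 t ^ 2 = 1)
  (Hwpos : forall t, 0 < t < l -> 0 < w t)
  (Hw0 : w 0 = 0) (Hwl : w l = 0)
  (Hz10 : z1 0 = 0) (Hz1l : z1 l = 0)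
  (Hz0l : z 0 > z l)
  (* embedded: the profile curve is injective on [0,l] *)
  (Hemb : forall s t, 0 <= s <= l -> 0 <= t <= l ->
     w s = w t -> z s = z t -> s = t)
  (* convex: the surface lies on one side of each tangent plane
     (by rotational symmetry, tangent planes at theta = 0 suffice) *)
  (Hconv : forall t s phi, 0 <= t <= l -> 0 <= s <= l ->
     - z1 t * (w s * cos phi - w t) + w1 t * (z s - z t) <= 0)
  (* positive Gaussian curvature everywhere (incl. the poles, by continuity
     and compactness this is a uniform positive lower bound on (0,l)) *)
  (Hcurv : exists k, 0 < k /\
     forall t, 0 < t < l -> k <= gauss_curv_rev w w1 w2 z1 z2 t)
  (Hf : forall a, 1 <= a -> 1 <= f a) :
  exists C : R, forall a : R, 1 <= a ->
    let D := fun t => sqrt (w1 t ^ 2 + (f a) ^ 2 * z1 t ^ 2) in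
    let h := fun t => f a * z t in
    let r := fun t => a * sqrt (w t ^ 2 + h t ^ 2) in
    (exists I1, surf_integral_Sa l a w D
                  (fun t _ => f a * a / (D t * r t ^ 4)) I1 /\ I1 <= C / a) /\
    (exists I2, surf_integral_Sa l a w D
                  (fun t _ => (f a) ^ 2 * a ^ 2 * w t / (D t ^ 3 * r t ^ 5)) I2
                /\ I2 <= C / a).
Proof.
  assert (cz : forall t, continuity_pt z t) by (intro t; apply derivable_continuous_pt; exists (z1 t); exact (Hz1 t)).
  assert (cz1 : forall t, continuity_pt z1 t) by (intro t; apply derivable_continuous_pt; exists (z2 t); exact (Hz2 t)).
  assert (cw : forall t, continuity_pt w t) by (intro t; apply derivable_continuous_pt; exists (w1 t); exact (Hw1 t)).
  assert (cw1 : forall t, continuity_pt w1 t) by (intro t; apply derivable_continuous_pt; exists (w2 t); exact (Hw2 t)).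
  destruct Hcurv as [k [Hk Hkc]].
  assert (nz : forall t, 0 < t < l -> z1 t <> 0).
  { intros t Ht E. specialize (Hkc t Ht). unfold gauss_curv_rev in Hkc. rewrite E in Hkc.
    unfold Rdiv in Hkc. rewrite !Rmult_0_l in Hkc. lra. }
  assert (neg : forall t, 0 < t < l -> z1 t < 0).
  { intros t Ht. destruct (Rlt_or_le (z1 t) 0) as [|Hp]; auto. exfalso.
    assert (Hp' : 0 < z1 t) by (destruct Hp; [auto| exfalso; apply (nz t Ht); auto]).
    destruct (MVT_cor2 z z1 0 l Hl (fun c _ => Hz1 c)) as [c0 [E Hc0]].
    assert (Hn : z1 c0 < 0) by (assert (z1 c0 * (l - 0) < 0) by lra; nra).
    destruct (Rlt_or_le c0 t) as [Hlt|Hge].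
    - destruct (IVT z1 c0 t cz1 Hlt Hn Hp') as [x [Hx Ex]].
      apply (nz x); [lra|auto].
    - assert (Hlt : t < c0) by (destruct Hge; auto; subst; lra).
      destruct (IVT (fun x => - z1 x) t c0 (fun x => continuity_pt_opp _ _ (cz1 x)) Hlt) as [x [Hx Ex]]; try lra.
      apply (nz x); [lra|lra]. }
  assert (nonpos : forall t, 0 <= t <= l -> z1 t <= 0).
  { intros t Ht. destruct (Req_dec t 0) as [->|H0]; [lra|].
    destruct (Req_dec t l) as [->|H1]; [lra|]. apply Rlt_le, neg; lra. }
  assert (Hend : forall t, (t = 0 \/ t = l) -> C1 <= Rabs (z t)).
  { intros t Ht. assert (Hw : w t = 0) by (destruct Ht; subst; auto).
    assert (Hb : C1^2 <= w t^2 + z t^2) by (apply Hbnd; destruct Ht; subst; lra).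
    rewrite Hw in Hb. rewrite <- (pow2_abs (z t)) in Hb. pose proof (Rabs_pos (z t)). nra. }
  set (dl := C1/2).
  set (psi := fun t => z1 t - (Rabs (z t) - dl + Rabs (Rabs (z t) - dl)) / 2).
  assert (Hpsi : forall t, 0 <= t <= l -> psi t < 0).
  { intros t Ht. unfold psi.
    pose proof (Rle_abs (Rabs (z t) - dl)). pose proof (Rle_abs (-(Rabs (z t) - dl))).
    rewrite Rabs_Ropp in H0.
    destruct (Req_dec t 0) as [->|H0']; [pose proof (Hend 0 (or_introl eq_refl)); unfold dl in *; lra|].
    destruct (Req_dec t l) as [->|H1']; [pose proof (Hend l (or_intror eq_refl)); unfold dl in *; lra|].
    pose proof (neg t ltac:(lra)). lra. }
  destruct (continuity_ab_maj psi 0 l) as [Mx [HMx HMxr]]; [lra| |].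
  { intros t Ht. unfold psi. cpt; auto. }
  set (c := - psi Mx).
  assert (Hc : 0 < c) by (unfold c; pose proof (Hpsi Mx HMxr); lra).
  assert (Hcz : forall t, 0 <= t <= l -> Rabs (z t) < C1/2 -> z1 t <= - c).
  { intros t Ht Hs. pose proof (HMx t Ht). unfold psi in H.
    rewrite (Rabs_left (Rabs (z t) - dl)) in H by (unfold dl; lra).
    unfold c, psi. lra. }
  set (m := Rmin (3/4*C1^2) 1).
  set (K := C2/(m^2*c)). set (M1 := C2/(C1/2)^4). set (M2 := 1/(C1/2)^3 + 1/(c^2*C1^3)).
  assert (Hm0 : 0 < m) by (unfold m; apply Rmin_glb_lt; nra).
  assert (HK : 0 <= K) by (unfold K; apply Rlt_le, Rdiv_lt_0_compat; [lra| apply Rmult_lt_0_compat; [apply pow_lt|]; lra]).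
  assert (HM1 : 0 <= M1) by (unfold M1; apply Rlt_le, Rdiv_lt_0_compat; [lra| apply pow_lt; lra]).
  assert (HM2 : 0 <= M2).
  { unfold M2. assert (0 < 1/(C1/2)^3) by (apply Rdiv_lt_0_compat; [lra|apply pow_lt; lra]).
    assert (0 < 1/(c^2*C1^3)) by (apply Rdiv_lt_0_compat; [lra|apply Rmult_lt_0_compat; apply pow_lt; lra]). lra. }
  pose proof PI_RGT_0 as HPI.
  exists (2*PI*(K*PI + M1*l + M2*l)).
  intros a Ha D h r.
  assert (Ha0 : 0 < a) by lra.
  assert (HF := Hf a Ha).
  assert (HD : forall t, 0 <= t <= l -> 1 <= D t).
  { intros t Ht. unfold D. rewrite <- sqrt_1. apply sqrt_le_1_alt.
    pose proof (Hunit t Ht). assert (0 <= z1 t ^2) by nra. assert (1 <= f a ^2) by nra. nra. }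
  assert (Hq : forall t, 0 <= t <= l -> C1^2 <= w t ^2 + h t ^2).
  { intros t Ht. unfold h. pose proof (Hbnd t Ht). rewrite Rpow_mult_distr.
    assert (0 <= z t ^2) by nra. assert (1 <= f a ^2) by nra. nra. }
  assert (Hqp : forall t, 0 <= t <= l -> 0 < w t ^2 + h t ^2) by (intros t Ht; pose proof (Hq t Ht); nra).
  split.
  - destruct (surf_bound l a w D (fun t _ => f a * a / (D t * r t ^ 4))
       (fun t => f a * a / (D t * r t ^ 4) * (a ^ 2 * D t * w t))
       (fun t => / a * (K * (- atan (f a * z t)) + M1 * t))
       (fun t => / a * (K * (- (/ (1 + (f a * z t) ^ 2) * (f a * z1 t))) + M1))
       ((K*PI + M1*l)/a)) as [I [HI HIb]].
    + auto.
    + intros; reflexivity.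
    + intros t Ht. pose proof (HD t Ht). pose proof (Hqp t Ht). unfold r, D, h in *.
      cpt; first [apply cw|apply cz|apply cw1|apply cz1|nra|
        (apply Rgt_not_eq, Rlt_gt; apply Rmult_lt_0_compat; [lra| apply pow_lt; apply Rmult_lt_0_compat; [lra| apply sqrt_lt_R0; lra]])].
    + intros t Ht. eapply dl_eq.
      * apply dl_mult; [apply dl_const|]. apply dl_plus; [apply dl_mult; [apply dl_const|]; apply dl_opp, dl_atan, dl_mult; [apply dl_const| apply Hz1]|].
        apply dl_mult; [apply dl_const|apply dl_id].
      * cbv beta. ring.
    + intros t Ht. cpt; first [(apply pow_nonzero; lra)|(apply Rgt_not_eq, Rlt_gt; apply Rmult_lt_0_compat; [apply pow_lt|]; lra)|apply cw|apply cz|apply cw1|apply cz1|nra|(apply Rgt_not_eq, Rlt_gt; nra)].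
    + intros t Ht.
      assert (Ht' : 0 <= t <= l) by lra.
      pose proof (HD t Ht') as HDt. pose proof (Hqp t Ht') as Hqt.
      unfold r. rewrite eq1 by lra. unfold h.
      apply Rmult_le_compat_l; [apply Rlt_le, Rinv_0_lt_compat; lra|].
      replace (- (/ (1 + (f a * z t) ^ 2) * (f a * z1 t))) with (-(f a * z1 t * / (1 + (f a * z t) ^ 2))) by ring.
      unfold K, M1, m.
      pose proof (Hbnd t Ht') as Hb.
      apply alg1; try lra.
      * apply Rlt_le, Hwpos; lra.
      * nra.
      * apply nonpos; lra.
      * apply Hcz; lra.
    + pose proof (atan_bound (f a * z l)). pose proof (atan_bound (f a * z 0)).
      replace (/ a * (K * - atan (f a * z l) + M1 * l) - / a * (K * - atan (f a * z 0) + M1 * 0))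
        with ((K * (atan (f a * z 0) - atan (f a * z l)) + M1 * l) * / a) by ring.
      unfold Rdiv. apply Rmult_le_compat_r; [apply Rlt_le, Rinv_0_lt_compat; lra|].
      assert (K * (atan (f a * z 0) - atan (f a * z l)) <= K * PI) by (apply Rmult_le_compat_l; lra).
      lra.
    + exists I. split; [unfold surf_integral_Sa, Rint; exact HI|].
      apply Rle_trans with (2 * PI * ((K * PI + M1 * l) / a)); auto.
      unfold Rdiv. rewrite <- Rmult_assoc. apply Rmult_le_compat_r; [apply Rlt_le, Rinv_0_lt_compat; lra|].
      assert (0 <= M2 * l) by nra. nra.
  - destruct (surf_bound l a w D (fun t _ => (f a) ^ 2 * a ^ 2 * w t / (D t ^ 3 * r t ^ 5))
       (fun t => (f a) ^ 2 * a ^ 2 * w t / (D t ^ 3 * r t ^ 5) * (a ^ 2 * D t * w t))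
       (fun t => / a * (M2 * t))
       (fun t => / a * M2)
       (M2 * l / a)) as [I [HI HIb]].
    + auto.
    + intros; reflexivity.
    + intros t Ht. pose proof (HD t Ht). pose proof (Hqp t Ht). unfold r, D, h in *.
      cpt; first [apply cw|apply cz|apply cw1|apply cz1|nra|
        (apply Rgt_not_eq, Rlt_gt; apply Rmult_lt_0_compat; [apply pow_lt; lra| apply pow_lt; apply Rmult_lt_0_compat; [lra| apply sqrt_lt_R0; lra]])].
    + intros t Ht. eapply dl_eq.
      * apply dl_mult; [apply dl_const|]. apply dl_mult; [apply dl_const|apply dl_id].
      * cbv beta. ring.
    + intros t Ht. apply cp_const.
    + intros t Ht.
      assert (Ht' : 0 <= t <= l) by lra.
      pose proof (HD t Ht') as HDt. pose proof (Hqp t Ht') as Hqt.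
      unfold r. rewrite eq2 by lra. unfold h.
      apply Rmult_le_compat_l; [apply Rlt_le, Rinv_0_lt_compat; lra|].
      unfold D. rewrite pow2_sqrt by nra.
      unfold M2.
      pose proof (Hbnd t Ht') as Hb.
      apply alg2; try lra.
      * apply Rlt_le, Hwpos; lra.
      * apply Hunit; lra.
      * apply Hcz; lra.
    + replace (/ a * (M2 * l) - / a * (M2 * 0)) with (M2 * l / a) by (field; lra). lra.
    + exists I. split; [unfold surf_integral_Sa, Rint; exact HI|].
      apply Rle_trans with (2 * PI * (M2 * l / a)); auto.
      unfold Rdiv. rewrite <- Rmult_assoc. rewrite <- (Rmult_assoc (2*PI)). apply Rmult_le_compat_r; [apply Rlt_le, Rinv_0_lt_compat; lra|].
      assert (0 <= K * PI) by nra. assert (0 <= M1 * l) by nra. nra.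
Qed.
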